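(* Let $m, n_0, n_1$ be positive integers and $n(\lambda) = n_0 + n_1\lambda$. There do not exist polynomials $x(\lambda), y(\lambda), z(\lambda)$ with real coefficients, two of which have degree $1$ and the third of which has degree $3$, whose constant terms $x_0 = x(0)$, $y_0 = y(0)$, $z_0 = z(0)$ are positive rational numbers satisfying $m/n_0 = 1/x_0 + 1/y_0 + 1/z_0$, and which satisfy $$\frac{m}{n(\lambda)} = \frac{1}{x(\lambda)} + \frac{1}{y(\lambda)} + \frac{1}{z(\lambda)}$$ identically in $\lambda$.
   Context: $\lambda$ is an indeterminate; the equation is an identity of rational functions in $\lambda$. *)

(* Defs.v *)
From HB Require Import structures.
From mathcomp Require Import all_boot all_order all_algebra fraction.
Set Implicit Arguments. Unset Strict Implicit. Unset Printing Implicit Defensive.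
Import Order.TTheory GRing.Theory Num.Theory.
Local Open Scope ring_scope.

Definition has_deg (R : realFieldType) (p : {poly R}) (d : nat) : Prop :=
  size p = d.+1.

Definition deg_113 (R : realFieldType) (x y z : {poly R}) : Prop :=
  [/\ has_deg x 1, has_deg y 1 & has_deg z 3] \/
  [/\ has_deg x 1, has_deg y 3 & has_deg z 1] \/
  [/\ has_deg x 3, has_deg y 1 & has_deg z 1].

Definition pos_rat (R : realFieldType) (a : R) : Prop :=
  exists q : rat, 0 < q /\ a = ratr q.

Notation "x %:F" := (@tofrac _ x).

(* Main.v *)
Require Import Defs.
From HB Require Import structures.
From mathcomp Require Import all_boot all_order all_algebra fraction.
From mathcomp Require Import ring lra.
Import Order.TTheory GRing.Theory Num.Theory.
Local Open Scope ring_scope.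

Lemma lin_eval (R : realFieldType) (p : {poly R}) t :
  (size p <= 2)%N -> p.[t] = p`_0 + p`_1 * t.
Proof.
move=> hp; rewrite (horner_coef_wide _ hp) !big_ord_recl big_ord0 /=.
by rewrite expr0 expr1 mulr1 addr0.
Qed.

Lemma core (R : realFieldType) (m n0 n1 : nat) (x y z : {poly R}) :
  (0 < m)%N -> (0 < n0)%N -> (0 < n1)%N ->
  size x = 2%N -> size y = 2%N -> size z = 4%N ->
  0 < x.[0] -> 0 < y.[0] -> 0 < z.[0] ->
  (m%:R)%:P * x * y * z
    = (n0%:R%:P + n1%:R *: 'X) * (y * z + x * z + x * y) -> False.
Proof.
move=> m0 n00 n10 sx sy sz x0 y0 z0 H.
set n := (n0%:R%:P + n1%:R *: 'X : {poly R}) in H.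
have nE t : n.[t] = n0%:R + n1%:R * t by rewrite /n !hornerE.
have sn : size n = 2%N.
  have n1nz : n1%:R != 0 :> R by rewrite pnatr_eq0 -lt0n.
  rewrite /n addrC size_polyDl size_scale // ?size_polyX //.
  by rewrite size_polyC; case: (n0%:R == 0 :> R).
have nz (p : {poly R}) : size p = 2%N -> p != 0 by move=> hp; rewrite -size_poly_eq0 hp.
set P := (m%:R)%:P * x * y - n * (x + y).
have HP : z * P = n * x * y.
  rewrite /P; transitivity ((m%:R)%:P * x * y * z - n * (x + y) * z); first ring.
  rewrite H; ring.
have snxy : size (n * x * y) = 4%N.
  by rewrite size_mul ?mulf_neq0 ?nz // size_mul ?nz // sn sx sy.
have Pnz : P != 0.
  apply/eqP=> P0; move: snxy; rewrite -HP P0 mulr0 size_poly0 //.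
have znz : z != 0 by rewrite -size_poly_eq0 sz.
have sP : size P = 1%N.
  move: snxy; rewrite -HP size_mul // sz.
  by case: (size P) => [|[|k]].
have PC := size1_polyC (eq_leq sP).
set c := P`_0 in PC.
have cpos : 0 < c.
  have := congr1 (horner^~ 0) HP; rewrite hornerM PC hornerC !hornerM nE mulr0 addr0.
  move=> e.
  have h1 : 0 < n0%:R * x.[0] * y.[0] :> R by rewrite !mulr_gt0 // ltr0n.
  rewrite -e in h1; nra.
have HQ : (m%:R *: x - n) * (m%:R *: y - n) = (m%:R * c)%:P + n * n.
  rewrite polyCM -PC /P -!mul_polyC; ring.
set u := m%:R *: x - n; set v := m%:R *: y - n.
have su : (size u <= 2)%N.
  rewrite /u (leq_trans (size_polyD _ _)) // geq_max size_polyN sn andbT.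
  by rewrite (leq_trans (size_scale_leq _ _)) ?sx.
have sv : (size v <= 2)%N.
  rewrite /v (leq_trans (size_polyD _ _)) // geq_max size_polyN sn andbT.
  by rewrite (leq_trans (size_scale_leq _ _)) ?sy.
have Ht t : (u`_0 + u`_1 * t) * (v`_0 + v`_1 * t) = m%:R * c + (n0%:R + n1%:R * t) ^+ 2.
  have := congr1 (horner^~ t) HQ; rewrite hornerM hornerD hornerC hornerM nE.
  by rewrite !lin_eval // expr2.
have e0 := Ht 0; have e1 := Ht 1; have e2 := Ht (-1).
have mc : 0 < m%:R * c :> R by rewrite mulr_gt0 // ltr0n.
have n1p : 0 < n1%:R :> R by rewrite ltr0n.
have BD : u`_1 * v`_1 = n1%:R ^+ 2 by nra.
have B0 : u`_1 != 0.
  apply/eqP=> b; move: BD; rewrite b mul0r => /esym/eqP; rewrite expf_eq0 /=.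
  by rewrite gt_eqF.
have := Ht (- (u`_0 / u`_1)).
have -> : u`_0 + u`_1 * - (u`_0 / u`_1) = 0 by field.
rewrite mul0r => e.
have : 0 <= (n0%:R + n1%:R * - (u`_0 / u`_1)) ^+ 2 :> R by apply: sqr_ge0.
lra.
Qed.

Lemma aux {F : fieldType} {M N X Y Z : F} : N != 0 -> X != 0 -> Y != 0 -> Z != 0 ->
  M / N = X^-1 + Y^-1 + Z^-1 -> M * X * Y * Z = N * (Y * Z + X * Z + X * Y).
Proof.
move=> hN hX hY hZ H.
have -> : M = M / N * N by rewrite divfK.
rewrite H; field.
by rewrite hX hY hZ.
Qed.

Theorem lemma5 (R : realFieldType) (m n0 n1 : nat) :
  (0 < m)%N -> (0 < n0)%N -> (0 < n1)%N ->
  ~ exists x y z : {poly R},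
      deg_113 x y z /\
      [/\ pos_rat x.[0], pos_rat y.[0] & pos_rat z.[0]] /\
      (m%:R / n0%:R : R) = x.[0]^-1 + y.[0]^-1 + z.[0]^-1 /\
      ((m%:R)%:P)%:F / (n0%:R%:P + n1%:R *: 'X : {poly R})%:F
        = (x%:F)^-1 + (y%:F)^-1 + (z%:F)^-1.
Proof.
move=> m0 n00 n10 [x [y [z [hdeg [[[qx [qx0 ex]] [qy [qy0 ey]] [qz [qz0 ez]]] [_ H]]]]]].
have px : 0 < x.[0] by rewrite ex ltr0q.
have py : 0 < y.[0] by rewrite ey ltr0q.
have pz : 0 < z.[0] by rewrite ez ltr0q.
have nz0 (p : {poly R}) : 0 < p.[0] -> p != 0.
  by move=> h; apply/eqP=> p0; move: h; rewrite p0 horner0 ltxx.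
set n := (n0%:R%:P + n1%:R *: 'X : {poly R}) in H.
have nnz : n != 0.
  apply: nz0; rewrite /n !hornerE ltr0n //.
have Hp : (m%:R)%:P * x * y * z = n * (y * z + x * z + x * y).
  have NF : n%:F != 0 by rewrite tofrac_eq0.
  have XF : x%:F != 0 by rewrite tofrac_eq0 nz0.
  have YF : y%:F != 0 by rewrite tofrac_eq0 nz0.
  have ZF : z%:F != 0 by rewrite tofrac_eq0 nz0.
  have := aux NF XF YF ZF H.
  by rewrite -!tofracM -!tofracD -tofracM => /eqP; rewrite tofrac_eq => /eqP.
case: hdeg => [[sx sy sz]|[[sx sy sz]|[sx sy sz]]].
- exact: (@core R m n0 n1 x y z).
- apply: (@core R m n0 n1 x z y) => //.
  transitivity ((m%:R)%:P * x * y * z); first ring.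
  rewrite Hp /n; ring.
- apply: (@core R m n0 n1 y z x) => //.
  transitivity ((m%:R)%:P * x * y * z); first ring.
  rewrite Hp /n; ring.
Qed.
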